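(* Let $n,m,t,\ell$ be positive integers with $\ell\le t$, let $\sigma\in\mathcal{S}_n$, and let $i_1,\ldots,i_\ell\in[n]$ be distinct positions such that $\sigma(i_j)>m$ for all $j\in[\ell]$ and $\sigma(i_j)\le\sigma(i_{j+1})-2$ for $j\in[\ell-1]$. Define $\sigma_e\in[n]^n$ by $\sigma_e(i)=\sigma(i)-1$ for $i\in\{i_1,\ldots,i_\ell\}$ and $\sigma_e(i)=\sigma(i)$ otherwise. For each $j\in[\ell]$ let $i'_j$ be the position with $\sigma(i'_j)=\sigma(i_j)-1$, so that $\sigma_e(i_j)=\sigma_e(i'_j)=\sigma(i_j)-1$ are repeated values of $\sigma_e$. Then for every $i\in[n]$, $$\mathcal{L}(\sigma_e)(i)=\begin{cases}\mathcal{L}(\sigma)(i)-1,&\text{if } i=i'_j \text{ and } i'_j>i_j \text{ for some } j\in[\ell],\\ \mathcal{L}(\sigma)(i),&\text{otherwise.}\end{cases}$$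
   Context: $[n]=\{1,\ldots,n\}$ and $\mathcal{S}_n$ is the set of permutations of $[n]$, written as sequences $(\sigma(1),\ldots,\sigma(n))$. For any sequence $\pi\in[n]^n$, its Lehmer encoding $\mathcal{L}(\pi)$ is the sequence with $\mathcal{L}(\pi)(i)=|\{j: j<i,\ \pi(j)>\pi(i)\}|$ for $i\in[n]$. *)

(* Defs.v *)
From mathcomp Require Import all_boot all_fingroup.
Set Implicit Arguments. Unset Strict Implicit. Unset Printing Implicit Defensive.

(* Positions [n] are represented by 'I_n (position i+1 <-> ordinal i);
   a sequence pi in [n]^n is a function 'I_n -> nat (values as in the paper). *)

Definition lehmer (n : nat) (p : 'I_n -> nat) (i : 'I_n) : nat :=
  #|[set j : 'I_n | (j < i) && (p i < p j)]|.

Definition permval (n : nat) (s : 'S_n) (i : 'I_n) : nat := (s i).+1.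

Definition sigma_e (n l : nat) (s : 'S_n) (idx : 'I_l -> 'I_n) (i : 'I_n) : nat :=
  if [exists j, idx j == i] then (permval s i).-1 else permval s i.

(* Main.v *)
Require Import Defs.
From mathcomp Require Import all_boot all_fingroup.
From mathcomp Require Import zify.

Lemma permval_inj n (s : 'S_n) : injective (permval s).
Proof. move=> x y; rewrite /permval => -[] /val_inj; exact: perm_inj. Qed.

Lemma gap_mono (n l : nat) (s : 'S_n) (idx : 'I_l -> 'I_n) :
  (forall j k : 'I_l, val k = (val j).+1 ->
     permval s (idx j) <= permval s (idx k) - 2) ->
  forall d (j k : 'I_l), val k = val j + d.+1 ->
     permval s (idx j) + 2 <= permval s (idx k).
Proof.
move=> H; elim=> [|d IH] j k Hk.
  have := H j k; rewrite Hk addn1 => /(_ erefl).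
  have : 0 < permval s (idx j) by [].
  lia.
have Hlt : val j + d.+1 < l.
  have := ltn_ord k; change (nat_of_ord k) with (val k); rewrite Hk; lia.
have := IH j (Ordinal Hlt) erefl.
have := H (Ordinal Hlt) k; rewrite /= Hk addnS => /(_ erefl).
have : 0 < permval s (idx (Ordinal Hlt)) by [].
lia.
Qed.

Lemma gap (n l : nat) (s : 'S_n) (idx : 'I_l -> 'I_n) :
  (forall j k : 'I_l, val k = (val j).+1 ->
     permval s (idx j) <= permval s (idx k) - 2) ->
  forall j k : 'I_l, permval s (idx j) != (permval s (idx k)).+1.
Proof.
move=> H j k; case: (ltngtP (val j) (val k)) => [jk|kj|/val_inj ->].
- have := @gap_mono _ _ s idx H (val k - val j).-1 j k ltac:(lia); lia.
- have := @gap_mono _ _ s idx H (val j - val k).-1 k j ltac:(lia); lia.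
- lia.
Qed.

Lemma key (n l : nat) (s : 'S_n) (idx : 'I_l -> 'I_n) (x y : 'I_n) :
  x != y ->
  (sigma_e s idx y < sigma_e s idx x) =
  (permval s y < permval s x) &&
  ~~ ([exists j, idx j == x] && ~~ [exists j, idx j == y] &&
      (permval s x == (permval s y).+1)).
Proof.
move=> xy.
have pxy : permval s x != permval s y.
  by apply: contra xy => /eqP /permval_inj ->.
have px : 0 < permval s x by [].
have py : 0 < permval s y by [].
rewrite /sigma_e.
case: [exists j, idx j == x]; case: [exists j, idx j == y] => /=;
  move: pxy px py; rewrite /permval; lia.
Qed.

Theorem lemma1 (n m t l : nat) (s : 'S_n) (idx : 'I_l -> 'I_n) :
  0 < n -> 0 < m -> 0 < t -> 0 < l -> l <= t ->
  injective idx ->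
  (forall j : 'I_l, m < permval s (idx j)) ->
  (forall j k : 'I_l, val k = (val j).+1 ->
     permval s (idx j) <= permval s (idx k) - 2) ->
  forall i : 'I_n,
    lehmer (sigma_e s idx) i =
    if [exists j : 'I_l, (permval s i == (permval s (idx j)).-1) && (idx j < i)]
    then (lehmer (permval s) i).-1
    else lehmer (permval s) i.
Proof.
move=> _ _ _ _ _ _ _ Hgap i.
rewrite /lehmer.
case: ifP => [/existsP [k /andP [/eqP pik ki]] | nE].
  have nDi : ~~ [exists j, idx j == i].
    apply/existsP => -[j /eqP ji].
    have := @gap _ _ s idx Hgap k j; rewrite ji pik.
    have : 0 < permval s (idx k) by [].
    lia.
  rewrite [in RHS](cardsD1 (idx k)) inE ki /=.
  have -> : permval s i < permval s (idx k).
    have : 0 < permval s (idx k) by []. lia.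
  rewrite add1n /=.
  apply: eq_card => j; rewrite !inE.
  case: (ltnP j i) => ji; last by rewrite !andFb andbF.
  have jni : j != i by rewrite neq_ltn ji.
  rewrite (@key _ _ s idx _ _ jni) (negbTE nDi) /= andbT.
  case: (eqVneq j (idx k)) => [-> | jk] /=.
    have -> : [exists j0, idx j0 == idx k] by apply/existsP; exists k.
    rewrite /=; have : 0 < permval s (idx k) by []. lia.
  have : permval s j != permval s (idx k).
    by apply: contra jk => /eqP /permval_inj ->.
  have : 0 < permval s (idx k) by [].
  case: [exists x, idx x == j]; rewrite /=; lia.
apply: eq_card => j; rewrite !inE.
case: (ltnP j i) => ji; last by rewrite !andFb.
have jni : j != i by rewrite neq_ltn ji.
rewrite (@key _ _ s idx _ _ jni) /=.
case: (permval s i < permval s j) => //=.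
apply/negP => /andP [/andP [/existsP [k /eqP kj] _] /eqP pj].
move/negbT/existsPn: nE => /(_ k).
by rewrite -kj in pj ji; rewrite pj /= eqxx ji.
Qed.
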